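(* Let $\alpha,\beta$ be real (or complex) parameters and let $k,m,s$ be non-negative integers with $s\le k$. Then $$\genfrac{\lfloor}{\rfloor}{0pt}{}{k+m}{k}^{\alpha,\beta}=\sum_{j=0}^{s}\left(\sum_{k-j\le i_1\le i_2\le\cdots\le i_{s-j}\le k}\ \prod_{l=0}^{s-j-1}\Big((\alpha+\beta)i_{l+1}+\alpha\big(m-(s-j-l)\big)\Big)\right)\genfrac{\lfloor}{\rfloor}{0pt}{}{k+m-s}{k-j}^{\alpha,\beta},$$ where, for $j=s$, the inner sum is over the empty tuple and equals $1$ (empty product).
   Context: For parameters $\alpha,\beta$, the generalized Stirling numbers $\genfrac{\lfloor}{\rfloor}{0pt}{}{n}{k}^{\alpha,\beta}$, $0\le k\le n$, are defined by the polynomial identity in $x$ $$x(x+\alpha)\cdots(x+(n-1)\alpha)=\sum_{k=0}^{n}\genfrac{\lfloor}{\rfloor}{0pt}{}{n}{k}^{\alpha,\beta}\,x(x-\beta)\cdots(x-(k-1)\beta),$$ (empty products equal $1$), and $\genfrac{\lfloor}{\rfloor}{0pt}{}{n}{k}^{\alpha,\beta}=0$ for $n<0$, $k<0$ or $k>n$. *)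

(* Defs.v *)
From mathcomp Require Import all_boot all_order all_algebra.
Set Implicit Arguments. Unset Strict Implicit. Unset Printing Implicit Defensive.
Import GRing.Theory.
Local Open Scope ring_scope.

Definition rise_poly (R : comNzRingType) (a : R) (n : nat) : {poly R} :=
  \prod_(i < n) ('X + (i%:R * a)%:P).

Definition fall_poly (R : comNzRingType) (b : R) (k : nat) : {poly R} :=
  \prod_(i < k) ('X - (i%:R * b)%:P).

(* S is the table of generalized Stirling numbers [n, k]^{alpha,beta}:
   it satisfies the defining polynomial identity for every n, and vanishes
   for k > n (negative indices never occur since indices are nat). *)
Definition is_gen_stirling (R : comNzRingType) (alpha beta : R)
  (S : nat -> nat -> R) : Prop :=
  (forall n : nat,
     rise_poly alpha n = \sum_(k < n.+1) S n k *: fall_poly beta k) /\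
  (forall n k : nat, (n < k)%N -> S n k = 0).

(* Main.v *)
Require Import Defs.
From mathcomp Require Import all_boot all_order all_algebra.
From mathcomp Require Import ring zify.
Import GRing.Theory.
Local Open Scope ring_scope.

Lemma fall_size (R : comNzRingType) (b : R) k :
  fall_poly b k \is monic /\ size (fall_poly b k) = k.+1.
Proof.
elim: k => [|k [mk sk]].
  by rewrite /fall_poly big_ord0 monic1 size_poly1.
rewrite /fall_poly big_ord_recr /= -/(fall_poly b k); split.
  by rewrite rpredM // monicXsubC.
by rewrite size_Mmonic ?monic_neq0 ?monicXsubC // size_XsubC sk addn2.
Qed.

Lemma fall_indep (R : comNzRingType) (b : R) N (c : nat -> R) :
  \sum_(k < N) c k *: fall_poly b k = 0 -> forall k, (k < N)%N -> c k = 0.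
Proof.
elim: N => [|N IH] H k hk; first by [].
move: H; rewrite big_ord_recr /= => H.
have cN : c N = 0.
  have := congr1 (fun p : {poly R} => p`_N) H; rewrite coefD coef_sum coefZ coef0.
  rewrite big1; last first.
    move=> i _; rewrite coefZ nth_default ?mulr0 //.
    by have [_ ->] := @fall_size _ b i.
  have [mN sN] := @fall_size _ b N.
  move: mN; rewrite monicE lead_coefE sN /= => /eqP ->.
  by rewrite add0r mulr1.
move: H; rewrite cN scale0r addr0 => H.
case: (ltngtP k N) => [lt|gt|->] //.
  exact: IH.
by move: hk; rewrite ltnS leqNgt gt.
Qed.
Lemma stir_rec (R : comNzRingType) (a b : R) S (HS : is_gen_stirling a b S) n k :
  S n.+1 k.+1 = S n k + (k.+1%:R * b + n%:R * a) * S n k.+1.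
Proof.
have [HP HZ] := HS.
have [lt|ge] := ltnP k.+1 n.+2; last first.
  by rewrite !HZ ?mulr0 ?addr0 //; lia.
pose c j := S n.+1 j - (if j is j'.+1 then S n j' else 0) - ((j%:R * b + n%:R * a) * S n j).
suff H : \sum_(j < n.+2) c j *: fall_poly b j = 0.
  have := @fall_indep _ _ _ _ H _ lt; rewrite /c /= => /eqP; rewrite subr_eq0 subr_eq => /eqP ->; by rewrite addrC.
have E1 : \sum_(j < n.+2) S n.+1 j *: fall_poly b j =
   \sum_(j < n.+1) S n j *: fall_poly b j.+1 +
   \sum_(j < n.+1) ((j%:R * b + n%:R * a) * S n j) *: fall_poly b j.
  rewrite -HP /rise_poly big_ord_recr /= -/(rise_poly a n) HP big_distrl /= -big_split /=.
  apply: eq_bigr => j _.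
  rewrite /fall_poly big_ord_recr /= -/(fall_poly b j).
  rewrite -!mul_polyC !polyCM !polyCD !polyCM; ring.
have E2 : \sum_(j < n.+2) (if (j : nat) is j'.+1 then S n j' else 0) *: fall_poly b j =
   \sum_(j < n.+1) S n j *: fall_poly b j.+1.
  by rewrite big_ord_recl /= scale0r add0r.
have E3 : \sum_(j < n.+2) ((j%:R * b + n%:R * a) * S n j) *: fall_poly b j =
   \sum_(j < n.+1) ((j%:R * b + n%:R * a) * S n j) *: fall_poly b j.
  by rewrite big_ord_recr /= HZ // mulr0 scale0r addr0.
rewrite /c; under eq_bigr do rewrite !scalerBl.
rewrite !sumrB E1 E2 E3; ring.
Qed.
Definition Tsum (R : fieldType) (al be : R) (k m n a : nat) : R :=
  \sum_(f : {ffun 'I_n -> 'I_k.+1} |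
           [forall l : 'I_n, (a <= f l)%N] &&
           [forall l1 : 'I_n, forall l2 : 'I_n, (l1 <= l2)%N ==> (f l1 <= f l2)%N])
       \prod_(l < n) ((al + be) * (f l)%:R + al * (m%:R - (n - l)%:R)).

Arguments Tsum {R}.

Lemma T0 (R : fieldType) (al be : R) k m a : Tsum al be k m 0 a = 1.
Proof.
rewrite /Tsum (eq_bigl predT); last first.
  move=> f /=; apply/andP; split; apply/forallP => -[] //.
under eq_bigr do rewrite big_ord0.
rewrite sumr_const card_ffun [X in (_ ^ X)%N]card_ord expn0 //.
Qed.

Lemma Tbig (R : fieldType) (al be : R) k m n a : (k < a)%N -> Tsum al be k m n.+1 a = 0.
Proof.
move=> ka; rewrite /Tsum big_pred0 // => f.
apply/negbTE/negP => /andP [/forallP /(_ ord0) h _].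
by move: (leq_trans ka h); rewrite ltnNge -ltnS ltn_ord.
Qed.

Lemma Tstep (R : fieldType) (al be : R) k m n a : (a <= k)%N ->
  Tsum al be k m n.+1 a =
  ((al + be) * a%:R + al * (m%:R - n.+1%:R)) * Tsum al be k m n a
  + Tsum al be k m n.+1 a.+1.
Proof.
move=> ak; rewrite /Tsum (bigID (fun f : {ffun 'I_n.+1 -> 'I_k.+1} => f ord0 == inord a)) /=.
congr (_ + _); last first.
  apply: eq_bigl => f; apply/idP/idP.
    move=> /andP [/andP [/forallP h1 h2m] h3]; have /forallP h2 := h2m; apply/andP; split => //.
    apply/forallP => l.
    have := h1 ord0; have /forallP /(_ l) /implyP := h2 ord0.
    move: h3; rewrite -(inj_eq val_inj) /= inordK; last by lia.
    move=> h3 h4 h5; have := h4 (leq0n _); lia.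
  move=> /andP [/forallP h1 h2]; apply/andP; split; first (apply/andP; split => //).
    by apply/forallP => l; have := h1 l; lia.
  rewrite -(inj_eq val_inj) /= inordK; last by lia.
  by have := h1 ord0; lia.
rewrite big_distrr /=.
pose h (g : {ffun 'I_n -> 'I_k.+1}) : {ffun 'I_n.+1 -> 'I_k.+1} :=
  [ffun i => if unlift ord0 i is Some j then g j else inord a].
pose hi (f : {ffun 'I_n.+1 -> 'I_k.+1}) : {ffun 'I_n -> 'I_k.+1} :=
  [ffun j => f (lift ord0 j)].
rewrite (reindex h); last first.
  exists hi => g; first by move=> _; apply/ffunP => j; rewrite !ffunE liftK.
  rewrite inE => /andP [_ /eqP h0]; apply/ffunP => i; rewrite ffunE.
  by case: unliftP => [j ->|->]; rewrite ?ffunE.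
apply: eq_big => g.
  have h0 : h g ord0 = inord a by rewrite ffunE unlift_none.
  have hl : forall j, h g (lift ord0 j) = g j by move=> j; rewrite ffunE liftK.
  rewrite h0 eqxx andbT.
  have ia : (inord a : 'I_k.+1) = a :> nat by rewrite inordK //; lia.
  apply/idP/idP.
    move=> /andP [/forallP h1 /forallP h2]; apply/andP; split.
      by apply/forallP => j; rewrite -hl.
    apply/forallP => j1; apply/forallP => j2; apply/implyP => le.
    rewrite -!hl; have /forallP /(_ (lift ord0 j2)) /implyP := h2 (lift ord0 j1).
    by apply; rewrite /= /bump /=; lia.
  move=> /andP [/forallP h1 /forallP h2]; apply/andP; split.
    apply/forallP => i; case: (unliftP ord0 i) => [j ->|->]; rewrite ?hl ?h0 ?ia //.
  apply/forallP => i1; apply/forallP => i2; apply/implyP => le.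
  case: (unliftP ord0 i1) => [j1 e1|e1]; case: (unliftP ord0 i2) => [j2 e2|e2];
    subst; rewrite ?hl ?h0 ?ia //.
  - by have /forallP /(_ j2) /implyP := h2 j1; apply; move: le; rewrite /= /bump /=; lia.
move=> _; rewrite big_ord_recl; congr (_ * _).
  rewrite ffunE unlift_none inordK; last by lia.
  by rewrite subn0.
apply: eq_bigr => j _; rewrite ffunE liftK /= /bump /= add1n subSS.
done.
Qed.
Lemma main (R : fieldType) (al be : R) S (HS : is_gen_stirling al be S) k m s :
  (s <= k)%N -> S (k + m)%N k =
  \sum_(j < s.+1) Tsum al be k m (s - j) (k - j) * S (k + m - s)%N (k - j)%N.
Proof.
elim: s => [|s IH] hs.
  by rewrite big_ord1 /= !subn0 T0 mul1r.
rewrite IH; last by lia.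
set N1 := (k + m - s.+1)%N.
have eN : (k + m - s = N1.+1)%N by rewrite /N1; lia.
rewrite eN.
pose g (j : nat) := (al + be) * (k - j)%:R + al * (m%:R - (s - j).+1%:R).
pose T n a := Tsum al be k m n a.
rewrite (eq_bigr (fun j : 'I_s.+1 => T (s - j)%N (k - j)%N * S N1 (k - j.+1)%N
     + g j * T (s - j)%N (k - j)%N * S N1 (k - j)%N)); last first.
  move=> j _; have hj := ltn_ord j.
  have e : (k - j = (k - j.+1).+1)%N by lia.
  rewrite e (@stir_rec _ _ _ _ HS) -e mulrDr; congr (_ + _).
  rewrite /g /T mulrCA mulrA; congr (_ * _ * _).
  have em : (m%:R : R) = N1%:R + (s - j).+1%:R - (k - j)%:R.
    apply/eqP; rewrite eq_sym subr_eq -!natrD; apply/eqP; congr (_%:R); rewrite /N1; lia.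
  rewrite em e; ring.
rewrite big_split /=.
rewrite [RHS]big_ord_recr /= subnn T0 mul1r.
rewrite [X in _ = X + _](eq_bigr (fun j : 'I_s.+1 => g j * T (s - j)%N (k - j)%N * S N1 (k - j)%N
     + T (s - j).+1 (k - j).+1 * S N1 (k - j)%N)); last first.
  move=> j _; have hj := ltn_ord j.
  rewrite subSn // Tstep; last by lia.
  by rewrite mulrDl.
rewrite big_split /=.
have D : \sum_(j < s.+1) T (s - j).+1 (k - j).+1 * S N1 (k - j)%N =
         \sum_(j < s) T (s - j)%N (k - j)%N * S N1 (k - j.+1)%N.
  rewrite big_ord_recl /= /T Tbig ?mul0r ?add0r; last by lia.
  apply: eq_bigr => j _; have hj := ltn_ord j.
  rewrite /bump /= add1n.
  have e1 : ((s - j.+1).+1 = s - j)%N by lia.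
  have e2 : ((k - j.+1).+1 = k - j)%N by lia.
  by rewrite e1 e2.
have A : \sum_(j < s.+1) T (s - j)%N (k - j)%N * S N1 (k - j.+1)%N =
         \sum_(j < s) T (s - j)%N (k - j)%N * S N1 (k - j.+1)%N + S N1 (k - s.+1)%N.
  by rewrite big_ord_recr /= subnn /T T0 mul1r.
rewrite D A; ring.
Qed.

Theorem theorem8 (R : fieldType) (alpha beta : R) (S : nat -> nat -> R)
  (HS : is_gen_stirling alpha beta S) (k m s : nat) (hsk : (s <= k)%N) :
  S (k + m)%N k =
  \sum_(j < s.+1)
    (\sum_(f : {ffun 'I_(s - j) -> 'I_k.+1} |
           [forall l : 'I_(s - j), (k - j <= f l)%N] &&
           [forall l1 : 'I_(s - j), forall l2 : 'I_(s - j), (l1 <= l2)%N ==> (f l1 <= f l2)%N])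
       \prod_(l < s - j)
          ((alpha + beta) * (f l)%:R
           + alpha * (m%:R - (s - j - l)%:R)))
    * S (k + m - s)%N (k - j)%N.
Proof. exact: main. Qed.
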